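(* Let $\wp\colon\tilde X\to X$ be a $G$-admissible $2$-cover of connected graphs, where $G\leq\mathrm{Aut}\,X$ is vertex-transitive and edge-transitive. Then $\wp$ is $G$-split with a sectional complement if and only if $\wp$ is the canonical double cover. (Equivalently, if $\wp$ is $G$-split, then it is split-transitive relative to $G$ if and only if $\wp$ is not the canonical double cover.)
   Context: Graphs are finite and simple; maps are composed on the right. A regular covering projection $\wp\colon\tilde X\to X$ is a surjective graph homomorphism, locally bijective on neighbourhoods, such that the group $\mathrm{CT}(\wp)$ of covering transformations (automorphisms $c$ of $\tilde X$ with $c\wp=\wp$) acts regularly on each fibre; a $2$-cover has $\mathrm{CT}(\wp)\cong\mathbb{Z}_2$. A lift of $g\in\mathrm{Aut}\,X$ is $\tilde g\in\mathrm{Aut}\,\tilde X$ with $\wp g=\tilde g\wp$; $\wp$ is $G$-admissible if every $g\in G$ has a lift, and then the lifted group $\tilde G$ is the group of all such lifts. $\wp$ is $G$-split if $\mathrm{CT}(\wp)$ has a complement in $\tilde G$. A section is a vertex set of $\tilde X$ meeting each fibre in exactly one vertex; a complement is sectional if it leaves some section invariant and transitive if it is transitive on $V(\tilde X)$; $\wp$ is split-transitive relative to $G$ if it is $G$-split and all complements of $\mathrm{CT}(\wp)$ in $\tilde G$ are transitive. The canonical double cover of $X$ is the $2$-cover obtained as the derived graph of the constant voltage assignment $\zeta(x)=1$ for all arcs $x$ (vertex set $V(X)\times\mathbb{Z}_2$, $(u,i)\sim(v,i+1)$ whenever $u\sim v$, projection $(u,i)\mapsto u$); ''$\wp$ is the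 canonical double cover'' means $\wp$ is isomorphic to this projection (via an isomorphism of covering graphs commuting with the projections). *)

(* Defs.v *)
From mathcomp Require Import all_boot all_fingroup.
Set Implicit Arguments. Unset Strict Implicit. Unset Printing Implicit Defensive.
Local Open Scope group_scope.

(* Permutations compose on the right in
   mathcomp ((g * h) x = h (g x)), matching the paper's convention. *)
Definition simple_graph (T : finType) (e : rel T) :=
  symmetric e /\ irreflexive e.

Definition connected_graph (T : finType) (e : rel T) :=
  forall x y : T, connect e x y.

Definition Aut_graph (T : finType) (e : rel T) : {set {perm T}} :=
  [set g : {perm T} | [forall x, forall y, e (g x) (g y) == e x y]].

Definition vertex_transitive (T : finType) (G : {set {perm T}}) :=
  forall x y : T, exists2 g, g \in G & g x = y.

Definition edge_transitive (T : finType) (e : rel T) (G : {set {perm T}}) :=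
  forall x y x' y' : T, e x y -> e x' y' ->
    exists2 g, g \in G &
      ((g x = x' /\ g y = y') \/ (g x = y' /\ g y = x')).

Section Cover.
Variables (T tT : finType) (e : rel T) (te : rel tT) (p : tT -> T).

Definition covering_projection :=
  [/\ forall x : T, exists u : tT, p u = x,
      forall u v : tT, te u v -> e (p u) (p v) &
      forall (u : tT) (y : T), e (p u) y ->
        exists! v : tT, te u v /\ p v = y].

Definition CT : {set {perm tT}} :=
  [set c in Aut_graph te | [forall u, p (c u) == p u]].

Definition regular_covering :=
  covering_projection /\
  forall u v : tT, p u = p v ->
    exists! c : {perm tT}, c \in CT /\ c u = v.

Definition two_cover := regular_covering /\ #|CT| = 2%N.

Definition is_lift (g : {perm T}) (tg : {perm tT}) :=
  tg \in Aut_graph te /\ forall u : tT, p (tg u) = g (p u).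

Definition admissible (G : {set {perm T}}) :=
  forall g, g \in G -> exists tg, is_lift g tg.

Definition lifted_group (G : {set {perm T}}) : {set {perm tT}} :=
  [set tg in Aut_graph te | [exists g in G, [forall u, p (tg u) == g (p u)]]].

Definition is_section (S : {set tT}) :=
  forall x : T, #|[set u in S | p u == x]| = 1%N.

Definition sectional (H : {set {perm tT}}) :=
  exists S : {set tT}, is_section S /\ forall h, h \in H -> h @: S = S.

Definition split_with_sectional_complement (G : {set {perm T}}) :=
  exists H : {group {perm tT}},
    H \in [complements to CT in lifted_group G] /\ sectional H.

(* Canonical double cover: vertex set T * bool, (u,i) ~ (v,i+1) iff u ~ v. *)
Definition cdc_rel : rel (T * bool) :=
  fun a b => e a.1 b.1 && (b.2 == ~~ a.2).

Definition is_canonical_double_cover :=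
  exists phi : tT -> T * bool,
    [/\ bijective phi,
        forall u v, cdc_rel (phi u) (phi v) = te u v &
        forall u, (phi u).1 = p u].

End Cover.

(* Main.v *)
Require Import Defs.
From mathcomp Require Import all_boot all_fingroup.
Set Implicit Arguments. Unset Strict Implicit. Unset Printing Implicit Defensive.
Local Open Scope group_scope.

Lemma autE (T : finType) (e : rel T) (g : {perm T}) : g \in Aut_graph e -> forall x y, e (g x) (g y) = e x y.
Proof. by rewrite inE => /forallP H x y; apply/eqP; move/forallP: (H x). Qed.

Lemma autI (T : finType) (e : rel T) (g : {perm T}) : (forall x y, e (g x) (g y) = e x y) -> g \in Aut_graph e.
Proof. by move=> H; rewrite inE; apply/forallP => x; apply/forallP => y; rewrite H. Qed.

Lemma autV (T : finType) (e : rel T) (g : {perm T}) : g \in Aut_graph e -> g^-1 \in Aut_graph e.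
Proof. move=> /autE H; apply: autI => x y; by rewrite -H !permKV. Qed.

Lemma autM (T : finType) (e : rel T) (g h : {perm T}) : g \in Aut_graph e -> h \in Aut_graph e -> g * h \in Aut_graph e.
Proof. move=> /autE H1 /autE H2; apply: autI => x y; by rewrite !permM H2 H1. Qed.

Section Back.
Variables (T tT : finType) (e : rel T) (te : rel tT) (p : tT -> T) (G : {group {perm T}}).
Hypothesis GA : G \subset Aut_graph e.
Variables (phi : tT -> T * bool) (psi : T * bool -> tT).
Hypothesis phiK : cancel phi psi.
Hypothesis psiK : cancel psi phi.
Hypothesis phie : forall u v, cdc_rel e (phi u) (phi v) = te u v.
Hypothesis phip : forall u, (phi u).1 = p u.

Definition Hset := [set h : {perm tT} | [exists g in G, [forall u, phi (h u) == (g (phi u).1, (phi u).2)]]].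

Lemma HsetP (h : {perm tT}) : reflect (exists2 g, g \in G & forall u, phi (h u) = (g (phi u).1, (phi u).2)) (h \in Hset).
Proof.
rewrite inE; apply: (iffP existsP) => [[g /andP[gG /forallP H]]|[g gG H]].
  by exists g => // u; apply/eqP.
by exists g; rewrite gG; apply/forallP => u; rewrite H.
Qed.

Lemma Hgroup : group_set Hset.
Proof.
apply/andP; split.
  apply/HsetP; exists 1; first exact: group1.
  by move=> u; rewrite !perm1; case: (phi u).
apply/subsetP => _ /mulsgP[h1 h2 /HsetP[g1 g1G H1] /HsetP[g2 g2G H2] ->].
apply/HsetP; exists (g1 * g2); first exact: groupM.
by move=> u; rewrite !permM H2 H1.
Qed.

Definition HG := Group Hgroup.

Definition lft (g : {perm T}) : {perm tT}.
Proof.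
refine (perm (f := fun u => psi (g (phi u).1, (phi u).2)) _).
move=> u v /(can_inj psiK) [] /perm_inj E1 E2.
by apply: (can_inj phiK); move: E1 E2; case: (phi u); case: (phi v) => /= ? ? ? ? -> ->.
Defined.

Lemma lftE g u : phi (lft g u) = (g (phi u).1, (phi u).2).
Proof. by rewrite permE psiK. Qed.

Lemma psurj x : p (psi (x, false)) = x.
Proof. by rewrite -phip psiK. Qed.

Lemma HsetA (h : {perm tT}) : h \in Hset -> h \in Aut_graph te.
Proof.
move=> /HsetP[g gG H]; apply: autI => u v.
rewrite -!phie !H /cdc_rel /=.
by rewrite (autE (subsetP GA _ gG)).
Qed.

Lemma Hlift (h : {perm tT}) (g : {perm T}) : g \in G -> (forall u, phi (h u) = (g (phi u).1, (phi u).2)) ->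
  forall u, p (h u) = g (p u).
Proof. by move=> gG H u; rewrite -!phip H. Qed.

Lemma back : split_with_sectional_complement te p G.
Proof.
exists HG; split.
  rewrite inE; apply/andP; split.
    apply/eqP/setP => h; rewrite in_setI in_set1 -[h \in gval HG]/(h \in Hset); apply/idP/idP => [/andP[hCT1 /HsetP[g gG H]]|/eqP->].
      have hCT : h \in CT te p by exact: hCT1.
      have g1 : g = 1.
        apply/permP => x; rewrite perm1 -{2}(psurj x).
        move: hCT; rewrite /CT in_set => /andP[_ /forallP /(_ (psi (x,false))) /eqP <-].
        by rewrite (Hlift gG H) psurj.
      apply/eqP/permP => u; rewrite perm1; apply: (can_inj phiK).
      by rewrite H g1 perm1; case: (phi u).
    rewrite (group1 HG) andbT /CT in_set; apply/andP; split; last by apply/forallP => u; rewrite perm1.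
    by apply: autI => x y; rewrite !perm1.
  apply/eqP/setP => t; apply/idP/idP.
    move=> /mulsgP[c h cCT /HsetP[g gG H] ->].
    move: cCT; rewrite /CT in_set => /andP[cA /forallP cp]; rewrite /lifted_group in_set.
    rewrite (autM cA) //; last by apply: HsetA; apply/HsetP; exists g.
    apply/existsP; exists g; rewrite gG; apply/forallP => u.
    by rewrite permM (Hlift gG H) (eqP (cp u)).
  rewrite /lifted_group in_set => /andP[tA /existsP[g /andP[gG /forallP tp]]].
  have lH : lft g \in Hset by apply/HsetP; exists g => // u; rewrite lftE.
  have lp := Hlift gG (lftE g).
  apply/mulsgP; exists (t * (lft g)^-1) (lft g) => //; last by rewrite mulgKV.
  rewrite /CT in_set (autM tA) ?autV ?HsetA //=; apply/forallP => u; rewrite permM.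
  apply/eqP; apply: (@perm_inj _ g); rewrite -lp permKV.
  exact/eqP.
exists [set u | ~~ (phi u).2]; split.
  move=> x; rewrite -(cards1 (psi (x, false))); apply: eq_card => u.
  rewrite !inE -phip.
  apply/idP/eqP => [/andP[A /eqP B]|->]; last by rewrite psiK eqxx.
  by apply: (can_inj phiK); rewrite psiK; move: A B; case: (phi u) => ? [] //= _ ->.
move=> h /HsetP[g gG H].
have K u : (h u \in [set u | ~~ (phi u).2]) = (u \in [set u | ~~ (phi u).2]).
  by rewrite !inE H.
apply/setP => w; apply/imsetP/idP => [[u uS ->]|wS]; first by rewrite K.
by exists (h^-1 w); rewrite ?permKV // -K permKV.
Qed.

End Back.
Section Fwd.
Variables (T tT : finType) (e : rel T) (te : rel tT) (p : tT -> T) (G : {group {perm T}}).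
Hypothesis tesym : symmetric te.
Hypothesis tconn : connected_graph te.
Hypothesis cov : two_cover e te p.
Hypothesis ET : edge_transitive e G.
Hypothesis adm : admissible te p G.

Lemma CT1 : 1 \in CT te p.
Proof.
rewrite /CT in_set; apply/andP; split; last by apply/forallP => u; rewrite perm1.
by apply: autI => x y; rewrite !perm1.
Qed.

Lemma CTE (c : {perm tT}) : c \in CT te p -> c \in Aut_graph te /\ forall u, p (c u) = p u.
Proof. by rewrite /CT in_set => /andP[A /forallP B]; split => // u; apply/eqP. Qed.

Lemma fwd : split_with_sectional_complement te p G -> is_canonical_double_cover e te p.
Proof.
case: cov => [[[surj hom ulift] reg] card2].
have [c cCT cn1] : exists2 c, c \in CT te p & c != 1.
  have : #|CT te p :\ 1| = 1%N by move: card2; rewrite (cardsD1 1) CT1 add1n => -[].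
  case: (set_0Vmem (CT te p :\ 1)) => [-> |[c]]; first by rewrite cards0.
  by rewrite in_setD1 => /andP[c1 cC] _; exists c.
have [cA cp] := CTE cCT.
have CTeq : CT te p = [set 1; c].
  apply/eqP; rewrite eq_sym eqEcard card2 cards2 eq_sym cn1 leqnn andbT.
  by apply/subsetP => x; rewrite in_set2 => /orP[] /eqP ->; [exact: CT1|].
have fib u v : p v = p u -> v = u \/ v = c u.
  move=> /esym puv; have [c' [[c'CT <-] _]] := reg u v puv.
  by move: c'CT; rewrite CTeq !inE => /orP[] /eqP ->; [left; rewrite perm1|right].
have cfix u : c u != u.
  apply/eqP => cu; have [c' [_ U]] := reg u u erefl.
  case/eqP: cn1; rewrite -(U c) ?(U 1) //; split=> //; first exact: CT1.
  by rewrite perm1.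
have cc u : c (c u) = u.
  case: (fib u (c (c u))) => [|//|/perm_inj E]; first by rewrite !cp.
  by move: (cfix u); rewrite E eqxx.
have uniq a b b' : te a b -> te a b' -> p b = p b' -> b = b'.
  move=> ab ab' pb; have [w [_ U]] := ulift a (p b) (hom _ _ ab).
  by rewrite -(U b) ?(U b').
move=> [H [HC [S [sec inv]]]].
have sS w : (c w \in S) = ~~ (w \in S).
  have := sec (p w); set A := [set _ in S | _].
  case: (boolP (w \in S)) => wS; case: (boolP (c w \in S)) => cwS //=.
    have : [set w; c w] \subset A by apply/subsetP => x; rewrite !inE => /orP[] /eqP ->; rewrite ?wS ?cwS ?cp eqxx.
    move/subset_leq_card; rewrite cards2 eq_sym cfix => /leq_trans H1 H2.
    by move: (H1 _ (eq_leq H2)).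
  suff -> : A = set0 by rewrite cards0.
  apply/setP => x; rewrite !inE; apply/negP => /andP[xS /eqP /fib[] E]; move: xS; rewrite E.
    by rewrite (negPf wS).
  by rewrite (negPf cwS).
have cross a b a' b' : te a b -> te a' b' -> p a = p a' -> p b = p b' ->
    ((a \in S) != (b \in S)) = ((a' \in S) != (b' \in S)).
  move=> ab ab' pa pb; case: (fib _ _ (esym pa)) => E; rewrite E in ab' *.
    by rewrite -(uniq _ _ _ ab ab' pb).
  have cab : te (c a) (c b) by rewrite (autE cA).
  have -> : b' = c b by apply: (uniq (c a)); rewrite ?cp.
  by rewrite !sS; case: (a \in S); case: (b \in S).
move: HC; rewrite inE => /andP[_ /eqP CTHe].
have hlift g : g \in G -> exists h : {perm tT},
    [/\ h \in Aut_graph te, forall u, p (h u) = g (p u) & forall u, (h u \in S) = (u \in S)].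
  move=> gG; have [tg [tgA tgp]] := adm gG.
  have : tg \in lifted_group te p G.
    rewrite /lifted_group in_set tgA; apply/existsP; exists g; rewrite gG.
    by apply/forallP => u; rewrite tgp.
  rewrite -CTHe => /mulsgP[c' h c'CT hH tgE].
  have := mem_mulg CT1 hH; rewrite CTHe mul1g /lifted_group in_set => /andP[hA _].
  exists h; split => //.
    move=> w; have [_ c'p] := CTE c'CT.
    have -> : h w = tg (c'^-1 w) by rewrite tgE permM permKV.
    by rewrite tgp -{2}(permKV c' w) c'p.
  by move=> u; rewrite -{1}(inv h hH) mem_imset //; exact: perm_inj.
have allcross u v : te u v -> (u \in S) != (v \in S).
  move=> uv; apply/negP => /eqP nc.
  suff clS : forall a b, te a b -> (a \in S) = (b \in S).
    have : connect te u (c u) := tconn u (c u).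
    case/connectP => s pth lst.
    have : (u \in S) = (last u s \in S).
      elim: s u pth {lst uv nc} => //= x s IH y /andP[yx pth].
      by rewrite (clS _ _ yx) (IH _ pth).
    by rewrite -lst sS; case: (u \in S).
  move=> a b ab; apply/eqP; apply/negPn/negP => cab.
  have [g gG [[g1 g2]|[g1 g2]]] := ET (hom _ _ uv) (hom _ _ ab).
    have [h [hA hp hS]] := hlift g gG.
    have huv : te (h u) (h v) by rewrite (autE hA).
    move: cab; rewrite (cross a b (h u) (h v)) ?hp ?g1 ?g2 // !hS.
    by rewrite nc eqxx.
  have [h [hA hp hS]] := hlift g gG.
  have huv : te (h v) (h u) by rewrite (autE hA) tesym.
  move: cab; rewrite (cross a b (h v) (h u)) ?hp ?g1 ?g2 // !hS.
  by rewrite nc eqxx.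
have [w0 _] : exists w0 : tT, true.
  case: (pickP tT) => [w0 _|H0]; first by exists w0.
  by case/eqP: cn1; apply/permP => x; have := H0 x.
pose phi u := (p u, u \notin S).
pose psi (xb : T * bool) := match [pick u | p u == xb.1] with
  | Some u => if (u \notin S) == xb.2 then u else c u
  | None => w0 end.
exists phi; split => //.
  exists psi.
    move=> u; rewrite /psi /phi /=; case: pickP => [u' /eqP /fib [->|->]|/(_ u)]; last by rewrite eqxx.
      by rewrite eqxx.
    by rewrite sS; case: (u \in S) => /=; rewrite cc.
  move=> [x b]; rewrite /psi /phi /=; case: pickP => [u /eqP pu|H0]; last first.
    by have [u pu] := surj x; move: (H0 u); rewrite pu eqxx.
  case: ifP => [/eqP <-|]; first by rewrite pu.
  by rewrite cp pu sS; case: b; case: (u \in S).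
move=> u v; rewrite /cdc_rel /phi /=; apply/idP/idP => [/andP[E B]|uv]; last first.
  rewrite hom //=; move: (allcross _ _ uv).
  by case: (u \in S); case: (v \in S).
have [w [[uw pw] _]] := ulift u (p v) E.
case: (fib _ _ pw) => [<- //|wc].
move: (allcross _ _ uw) B; rewrite wc sS.
by case: (u \in S); case: (v \in S).
Qed.

End Fwd.

Theorem proposition3p3 (T tT : finType) (e : rel T) (te : rel tT)
    (p : tT -> T) (G : {group {perm T}}) :
  simple_graph e -> simple_graph te ->
  connected_graph e -> connected_graph te ->
  two_cover e te p ->
  G \subset Aut_graph e ->
  vertex_transitive G -> edge_transitive e G ->
  admissible te p G ->
  (split_with_sectional_complement te p G <-> is_canonical_double_cover e te p).
Proof.
move=> _ [tesym _] _ tconn cov GA _ ET adm; split; first exact: fwd.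
case=> phi [[psi phiK psiK] phie phip].
exact: (back GA phiK psiK phie phip).
Qed.
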